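(* Let $\mathcal{N}$ be a 2-step nilpotent Lie algebra over $\mathbb{R}$ whose commutator ideal $\mathcal{Z}=[\mathcal{N},\mathcal{N}]$ coincides with its center, and let $\mathcal{N}=\mathcal{V}\oplus\mathcal{Z}$ for a subspace $\mathcal{V}$. Suppose that every Lie ring automorphism $f$ of $\mathcal{N}$ with $f(\mathcal{V})=\mathcal{V}$ is a Lie algebra automorphism. Then for every Lie ring automorphism $f$ of $\mathcal{N}$ there exist a central automorphism $\mu$ and a Lie algebra automorphism $\overline{f}$ of $\mathcal{N}$ such that $f=\mu\circ\overline{f}$.
   Context: A Lie ring automorphism of a real Lie algebra is a bijective additive map preserving the bracket (not necessarily $\mathbb{R}$-linear); a Lie algebra automorphism is an $\mathbb{R}$-linear one. A central automorphism is a Lie ring automorphism $\mu$ with $\mu(x)-x$ in the center of $\mathcal{N}$ for all $x\in\mathcal{N}$. *)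

(* Defs.v *)
From HB Require Import structures.
From mathcomp Require Import all_boot all_order all_algebra.
From mathcomp Require Import reals.
Set Implicit Arguments. Unset Strict Implicit. Unset Printing Implicit Defensive.
Import Order.TTheory GRing.Theory Num.Theory.
Local Open Scope ring_scope.

Section Lie.
Variables (R : realType) (N : lmodType R) (br : N -> N -> N).

Definition is_lie_bracket : Prop :=
  [/\ forall a x y z, br (a *: x + y) z = a *: br x z + br y z,
      forall a x y z, br x (a *: y + z) = a *: br x y + br x z,
      forall x, br x x = 0
    & forall x y z, br x (br y z) + br y (br z x) + br z (br x y) = 0].

Definition two_step_nilpotent : Prop :=
  (forall x y z, br (br x y) z = 0) /\ exists x y, br x y != 0.

(* the commutator ideal [N,N]: (additive, hence linear) span of brackets *)
Definition in_commutator (z : N) : Prop :=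
  exists s : seq (N * N), z = \sum_(p <- s) br p.1 p.2.

Definition in_center (z : N) : Prop := forall y, br z y = 0.

Definition is_subspace (V : N -> Prop) : Prop :=
  [/\ V 0, forall x y, V x -> V y -> V (x + y) & forall a x, V x -> V (a *: x)].

Definition direct_sum (V Z : N -> Prop) : Prop :=
  (forall x, exists v z, [/\ V v, Z z & x = v + z]) /\
  (forall x, V x -> Z x -> x = 0).

Definition lie_ring_aut (f : N -> N) : Prop :=
  [/\ bijective f, forall x y, f (x + y) = f x + f y
    & forall x y, f (br x y) = br (f x) (f y)].

Definition lie_alg_aut (f : N -> N) : Prop :=
  lie_ring_aut f /\ forall (a : R) x, f (a *: x) = a *: f x.

Definition central_aut (f : N -> N) : Prop :=
  lie_ring_aut f /\ forall x, in_center (f x - x).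

Definition maps_onto_itself (f : N -> N) (V : N -> Prop) : Prop :=
  forall y, V y <-> exists x, V x /\ f x = y.

End Lie.

(* Main.v *)
Require Import Defs.
From HB Require Import structures.
From mathcomp Require Import all_boot all_order all_algebra.
From mathcomp Require Import reals.
From Stdlib Require Import ClassicalEpsilon.
Import GRing.Theory Num.Theory.
Local Open Scope ring_scope.

Section Aux.
Variables (R : realType) (N : lmodType R) (br : N -> N -> N) (V : N -> Prop).
Hypothesis Hlie : is_lie_bracket br.
Hypothesis Hcomm : forall z, in_commutator br z -> in_center br z.
Hypothesis HV : is_subspace V.
Hypothesis Hds : direct_sum V (in_center br).

Local Notation Z := (in_center br).

Lemma addl x y z : br (x + y) z = br x z + br y z.
Proof. move: Hlie => -[H _ _ _]; by have := H 1 x y z; rewrite !scale1r. Qed.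
Lemma addr x y z : br x (y + z) = br x y + br x z.
Proof. move: Hlie => -[_ H _ _]; by have := H 1 x y z; rewrite !scale1r. Qed.

Lemma dbl0 (a : N) : a = a + a -> a = 0.
Proof. by move=> /(congr1 (fun t => t - a)) /=; rewrite subrr addrK. Qed.

Lemma br0l y : br 0 y = 0.
Proof.
have H := addl 0 0 y; rewrite addr0 in H.
exact: dbl0.
Qed.
Lemma br0r y : br y 0 = 0.
Proof.
have H := addr y 0 0; rewrite addr0 in H.
exact: dbl0.
Qed.

Lemma antisym x y : br x y = - br y x.
Proof.
move: Hlie => -[] _ _ Hxx _.
have := Hxx (x + y); rewrite addl !addr !Hxx add0r addr0 => /eqP.
by rewrite addr_eq0 => /eqP.
Qed.

Lemma Zr z y : Z z -> br y z = 0.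
Proof. by move=> Hz; rewrite antisym Hz oppr0. Qed.

Lemma Z0 : Z 0. Proof. by move=> y; rewrite br0l. Qed.
Lemma ZD x y : Z x -> Z y -> Z (x + y).
Proof. by move=> Hx Hy w; rewrite addl Hx Hy addr0. Qed.
Lemma ZN x : Z x -> Z (- x).
Proof.
move=> Hx w; move: Hlie => -[] H _ _ _.
by rewrite -scaleN1r -[_ *: x]addr0 H Hx br0l scaler0 addr0.
Qed.
Lemma ZB x y : Z x -> Z y -> Z (x - y).
Proof. by move=> Hx Hy; apply: ZD => //; apply: ZN. Qed.

Lemma brZ a b w w' : Z w -> Z w' -> br (a + w) (b + w') = br a b.
Proof. by move=> Hw Hw'; rewrite addl !addr (Zr _ a Hw') (Hw b) (Hw w') !addr0. Qed.

Lemma VN x : V x -> V (- x).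
Proof. by move: HV => -[] _ _ H Hx; rewrite -scaleN1r; apply: H. Qed.

Lemma VZ0 x : V x -> Z x -> x = 0.
Proof. by move: Hds => -[_ H]; apply: H. Qed.

Lemma VZsum v z : V v -> Z z -> v + z = 0 -> v = 0 /\ z = 0.
Proof.
move=> Hv Hz H.
have Ev : v = - z by apply/eqP; rewrite -addr_eq0 H.
have v0 : v = 0 by apply: VZ0 => //; rewrite Ev; apply: ZN.
by split => //; move: H; rewrite v0 add0r.
Qed.

Lemma decomp x : exists v, V v /\ Z (x - v).
Proof.
move: Hds => -[] H _; have [v [z [Hv Hz ->]]] := H x.
by exists v; split => //; rewrite addrC addKr.
Qed.

Definition pV x := proj1_sig (constructive_indefinite_description _ (decomp x)).
Lemma pV_V x : V (pV x).
Proof. by rewrite /pV; case: constructive_indefinite_description => v []. Qed.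
Lemma pV_Z x : Z (x - pV x).
Proof. by rewrite /pV; case: constructive_indefinite_description => v []. Qed.

Lemma pV_uniq x v : V v -> Z (x - v) -> pV x = v.
Proof.
move=> Hv Hz; apply/eqP; rewrite -subr_eq0; apply/eqP; apply: VZ0.
  by move: HV => -[] _ HD _; apply: HD; [apply: pV_V | apply: VN].
have -> : pV x - v = (x - v) - (x - pV x).
  by rewrite opprB [RHS]addrC addrA subrK.
by apply: ZB => //; apply: pV_Z.
Qed.

Lemma pVD x y : pV (x + y) = pV x + pV y.
Proof.
apply: pV_uniq; first by move: HV => -[] _ HD _; apply: HD; apply: pV_V.
have -> : x + y - (pV x + pV y) = (x - pV x) + (y - pV y).
  by rewrite opprD addrACA.
by apply: ZD; apply: pV_Z.
Qed.
Lemma pVZ z : Z z -> pV z = 0.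
Proof. by move=> Hz; apply: pV_uniq; [case: HV | rewrite subr0]. Qed.
Lemma pVV v : V v -> pV v = v.
Proof. by move=> Hv; apply: pV_uniq; rewrite // subrr; apply: Z0. Qed.

Lemma add0 (f : N -> N) : (forall x y, f (x + y) = f x + f y) -> f 0 = 0.
Proof.
move=> fD; have H := fD 0 0; rewrite addr0 in H.
exact: dbl0.
Qed.
Lemma addB (f : N -> N) : (forall x y, f (x + y) = f x + f y) ->
  forall x y, f (x - y) = f x - f y.
Proof.
move=> fD x y; have H : f (x - y) + f y = f x by rewrite -fD subrK.
by rewrite -H addrK.
Qed.

Variable f : N -> N.
Hypothesis Hf : lie_ring_aut br f.

Lemma fD x y : f (x + y) = f x + f y. Proof. by case: Hf. Qed.
Lemma fbr x y : f (br x y) = br (f x) (f y). Proof. by case: Hf. Qed.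
Lemma f0 : f 0 = 0. Proof. by apply: add0 => a b; apply: fD. Qed.
Lemma fB x y : f (x - y) = f x - f y. Proof. by apply: addB => a b; apply: fD. Qed.
Lemma finj : injective f. Proof. by move: Hf => -[] /bij_inj. Qed.
Lemma fsurj y : exists x, f x = y.
Proof. by move: Hf => -[] -[g _ gK] _ _; exists (g y); rewrite gK. Qed.

Lemma fZ z : Z z -> Z (f z).
Proof. by move=> Hz y; have [x <-] := fsurj y; rewrite -fbr Hz f0. Qed.
Lemma fZ' z : Z (f z) -> Z z.
Proof. by move=> Hz y; apply: finj; rewrite fbr Hz f0. Qed.

Definition g x := pV (f (pV x)) + f (x - pV x).

Lemma pVfpV w : pV (f (pV w)) = pV (f w).
Proof.
have -> : f (pV w) = f w - f (w - pV w) by rewrite -fB opprB addrC subrK.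
by rewrite (addB _ pVD) (pVZ _ (fZ _ (pV_Z w))) subr0.
Qed.

Lemma gV x : V x -> g x = pV (f x).
Proof. by move=> Hx; rewrite /g (pVV _ Hx) subrr f0 addr0. Qed.

Lemma gfZ x : Z (g x - f x).
Proof.
rewrite /g fB.
have -> : pV (f (pV x)) + (f x - f (pV x)) - f x = - (f (pV x) - pV (f (pV x))).
  by rewrite opprB addrA addrAC addrK.
by apply: ZN; apply: pV_Z.
Qed.

Lemma gD x y : g (x + y) = g x + g y.
Proof.
rewrite /g !pVD fD pVD.
have -> : x + y - (pV x + pV y) = (x - pV x) + (y - pV y).
  by rewrite opprD addrACA.
by rewrite fD addrACA.
Qed.

Lemma gdecomp x : g x = f x + (g x - f x).
Proof. by rewrite addrC subrK. Qed.

Lemma gbr x y : g (br x y) = br (g x) (g y).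
Proof.
rewrite (gdecomp x) (gdecomp y) brZ; try exact: gfZ.
have Hz : Z (br x y) by apply: Hcomm; exists [:: (x, y)]; rewrite big_cons big_nil addr0.
rewrite /g (pVZ _ Hz) subr0. rewrite [f 0]f0 pVZ ?add0r ?fbr //; exact: Z0.
Qed.

Lemma gB x y : g (x - y) = g x - g y.
Proof. by apply: addB => a b; apply: gD. Qed.

Lemma g0 x : g x = 0 -> x = 0.
Proof.
rewrite /g => H.
have [H1 H2] := VZsum _ _ (pV_V _) (fZ _ (pV_Z x)) H.
have H3 : f (x - pV x) = f 0 by rewrite H2 f0.
have H5 := finj _ _ H3.
have Hc : Z (f (pV x)) by have := pV_Z (f (pV x)); rewrite H1 subr0.
have H4 : pV x = 0 by apply: VZ0; [apply: pV_V | apply: fZ'].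
by move: H5; rewrite H4 subr0.
Qed.

Lemma ginj : injective g.
Proof. by move=> x y H; apply/eqP; rewrite -subr_eq0; apply/eqP; apply: g0; rewrite gB H subrr. Qed.

Lemma gsurj y : exists x, g x = y.
Proof.
have [w Hw] := fsurj y; have [u Hu] := fsurj (y - pV y).
have Zu : Z u by apply: fZ'; rewrite Hu; apply: pV_Z.
exists (pV w + u).
rewrite /g pVD (pVZ _ Zu) addr0 (pVV _ (pV_V w)).
by rewrite [pV w + u]addrC addrK pVfpV Hu Hw addrC subrK.
Qed.

Lemma gsurjV y : V y -> exists x, V x /\ g x = y.
Proof.
move=> Hy; have [w Hw] := fsurj y.
exists (pV w); split; first exact: pV_V.
by rewrite (gV _ (pV_V w)) pVfpV Hw (pVV _ Hy).
Qed.

Definition ginv y := proj1_sig (constructive_indefinite_description _ (gsurj y)).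
Lemma ginvK : cancel ginv g.
Proof. by move=> y; rewrite /ginv; case: constructive_indefinite_description. Qed.
Lemma gK : cancel g ginv.
Proof. by move=> x; apply: ginj; rewrite ginvK. Qed.

Lemma g_aut : lie_ring_aut br g.
Proof. split; [by exists ginv; [apply: gK | apply: ginvK] | exact: gD | exact: gbr]. Qed.

Lemma g_onto : maps_onto_itself g V.
Proof.
move=> y; split; first exact: gsurjV.
by move=> [x [Hx <-]]; rewrite gV //; apply: pV_V.
Qed.

Lemma main_aux :
  (forall f, lie_ring_aut br f -> maps_onto_itself f V -> lie_alg_aut br f) ->
  exists mu fbar : N -> N,
    [/\ central_aut br mu, lie_alg_aut br fbar & forall x, f x = mu (fbar x)].
Proof.
move=> Hhyp.
exists (fun y => f (ginv y)), g; split.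
- split; first split.
  + apply: bij_comp; first by case: Hf.
    by exists g; [apply: ginvK | apply: gK].
  + by move=> x y; rewrite -fD; congr f; apply: ginj; rewrite gD !ginvK.
  + by move=> x y; rewrite -fbr; congr f; apply: ginj; rewrite gbr !ginvK.
  + move=> x; rewrite -{2}(ginvK x); have := gfZ (ginv x).
    by move/ZN; rewrite opprB.
- apply: Hhyp; first exact: g_aut.
  exact: g_onto.
- by move=> x; rewrite gK.
Qed.

End Aux.

Theorem proposition3p2 (R : realType) (N : lmodType R) (br : N -> N -> N)
  (V : N -> Prop) :
  is_lie_bracket br ->
  two_step_nilpotent br ->
  (forall z, in_commutator br z <-> in_center br z) ->
  is_subspace V ->
  direct_sum V (in_center br) ->
  (forall f, lie_ring_aut br f -> maps_onto_itself f V -> lie_alg_aut br f) ->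
  forall f, lie_ring_aut br f ->
  exists mu fbar : N -> N,
    [/\ central_aut br mu, lie_alg_aut br fbar & forall x, f x = mu (fbar x)].
Proof.
move=> Hlie _ Hcz HV Hds Hhyp f Hf.
have Hcomm : forall z, in_commutator br z -> in_center br z by move=> z /Hcz.
exact: (@main_aux R N br V Hlie Hcomm HV Hds f Hf Hhyp).
Qed.
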